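(* Let $a,b,c\in\mathbb{R}$ be such that $$B=\begin{pmatrix}1&a&b\\ a&1&c\\ b&c&1\end{pmatrix}$$ is positive semidefinite. Let $\mathbb{I}\subseteq[0,\infty)$ be an interval and $f:\mathbb{I}\to[-1,1]$ a strictly decreasing function with range $[-1,1]$ satisfying $f(p+q)=f(p)f(q)-\sqrt{1-f(p)^2}\sqrt{1-f(q)^2}$ whenever $p,q,p+q\in\mathbb{I}$. Let $g:[0,\infty)\to[0,\infty)$ be metric-preserving and set $h=g\circ f^{-1}$. Then $$h(a)\le h(b)+h(c).$$ Consequently, for every real $k\ge2$, $$\sqrt[k]{1-|a|^k}\le\sqrt[k]{1-|b|^k}+\sqrt[k]{1-|c|^k}.$$
   Context: A function $g:[0,\infty)\to[0,\infty)$ is metric-preserving if for every metric space $(M,d)$, the function $g\circ d$ is again a metric on $M$. *)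

(* Defs.v *)
From Stdlib Require Import Reals.
Open Scope R_scope.

(* B = [[1,a,b],[a,1,c],[b,c,1]] is positive semidefinite:
   v^T B v >= 0 for every v = (x,y,z) in R^3. *)
Definition psd3 (a b c : R) : Prop :=
  forall x y z : R,
    0 <= x*x + y*y + z*z + 2*a*x*y + 2*b*x*z + 2*c*y*z.

Definition interval_in_nonneg (I : R -> Prop) : Prop :=
  (forall x, I x -> 0 <= x) /\
  (forall x y z, I x -> I z -> x <= y -> y <= z -> I y).

Definition is_metric (M : Type) (d : M -> M -> R) : Prop :=
  (forall x y, 0 <= d x y) /\
  (forall x y, d x y = 0 <-> x = y) /\
  (forall x y, d x y = d y x) /\
  (forall x y z, d x z <= d x y + d y z).

Definition metric_preserving (g : R -> R) : Prop :=
  (forall x, 0 <= x -> 0 <= g x) /\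
  (forall (M : Type) (d : M -> M -> R), is_metric M d -> is_metric M (fun x y => g (d x y))).

(* x^y for x >= 0, y > 0 real, with the convention 0^y = 0
   (Stdlib's Rpower 0 y = 1, so we guard it). *)
Definition rpow (x y : R) : R :=
  if Rlt_dec 0 x then Rpower x y else 0.

(* Main.v *)
Require Import Defs.
From Stdlib Require Import Reals Lra Psatz Classical.
Open Scope R_scope.

Lemma psd_swap12 a b c : psd3 a b c -> psd3 a c b.
Proof. intros H x y z. specialize (H y x z). lra. Qed.
Lemma psd_swap13 a b c : psd3 a b c -> psd3 b a c.
Proof. intros H x y z. specialize (H x z y). lra. Qed.
Lemma psd_neg a b c : psd3 a b c -> psd3 (-a) (-b) c.
Proof. intros H x y z. specialize (H (-x) y z). lra. Qed.

Lemma psd_b2 a b c : psd3 a b c -> 0 <= 1 - b^2.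
Proof. intros H. specialize (H 1 0 (-b)). lra. Qed.

Lemma psd_angle a b c : psd3 a b c -> b*c - sqrt(1-b^2)*sqrt(1-c^2) <= a.
Proof.
  intros H.
  assert (hb : 0 <= 1 - b^2) by (apply (psd_b2 a b c H)).
  assert (hc : 0 <= 1 - c^2) by (pose proof (H 0 1 (-c)); lra).
  pose proof (sqrt_sqrt _ hb) as Eb. pose proof (sqrt_sqrt _ hc) as Ec.
  pose proof (sqrt_pos (1-b^2)) as Pb. pose proof (sqrt_pos (1-c^2)) as Pc.
  set (sb := sqrt (1-b^2)) in *. set (sc := sqrt (1-c^2)) in *.
  apply Rnot_lt_le; intro Hlt.
  pose (d := a - b*c).
  assert (Hd : d < - (sb*sc)) by (unfold d; lra).
  assert (Hd2 : (sb*sc)^2 < d^2) by (assert (0 <= sb*sc) by (apply Rmult_le_pos; lra); nra).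
  destruct (Rle_lt_or_eq_dec 0 (1-b^2) hb) as [hb'|hb'].
  - pose proof (H (-d) (1-b^2) (b*d - c*(1-b^2))) as H1.
    assert (E : (-d)*(-d)+(1-b^2)*(1-b^2)+(b*d - c*(1-b^2))*(b*d - c*(1-b^2)) +
       2*a*(-d)*(1-b^2) + 2*b*(-d)*(b*d - c*(1-b^2)) + 2*c*(1-b^2)*(b*d - c*(1-b^2))
       = (1-b^2)*((1-b^2)*(1-c^2) - d^2)) by (unfold d; ring).
    rewrite E in H1.
    assert (E2 : (sb*sc)^2 = (1-b^2)*(1-c^2)) by (rewrite <- Eb, <- Ec; ring).
    nra.
  - assert (sb = 0) by (unfold sb; rewrite <- hb'; apply sqrt_0).
    pose proof (H 1 (-d) (-(b - c*d))) as H1.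
    assert (E : 1*1 + (-d)*(-d) + (-(b - c*d))*(-(b - c*d)) + 2*a*1*(-d) + 2*b*1*(-(b - c*d)) + 2*c*(-d)*(-(b-c*d))
      = (1-b^2) - d^2*(1+c^2)) by (unfold d; ring).
    rewrite E in H1. rewrite <- hb' in H1.
    assert (d < 0) by (rewrite H0 in Hd; lra). nra.
Qed.

Lemma tri_from_f (I : R -> Prop) (f : R -> R) pa pb pc :
  interval_in_nonneg I ->
  (forall p q, I p -> I q -> p < q -> f q < f p) ->
  (forall p q, I p -> I q -> I (p + q) ->
        f (p + q) = f p * f q - sqrt (1 - f p ^ 2) * sqrt (1 - f q ^ 2)) ->
  I pa -> I pb -> I pc ->
  f pb * f pc - sqrt (1 - f pb ^ 2) * sqrt (1 - f pc ^ 2) <= f pa ->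
  pa <= pb + pc.
Proof.
  intros [Hnn Hint] Hdec Hfe Ha Hb Hc Hle.
  apply Rnot_lt_le; intro Hlt.
  pose proof (Hnn _ Hc).
  assert (Ibc : I (pb + pc)) by (apply (Hint pb _ pa); auto; lra).
  pose proof (Hdec _ _ Ibc Ha Hlt). rewrite (Hfe _ _ Hb Hc Ibc) in H0. lra.
Qed.

Inductive three := P1 | P2 | P3.

Lemma g0 (g : R -> R) : metric_preserving g -> g 0 = 0.
Proof.
  intros [_ Hm].
  assert (Hd : is_metric unit (fun _ _ => 0)).
  { split; [intros; lra|split; [intros [] []; split; auto|split; [auto|intros; lra]]]. }
  destruct (Hm unit _ Hd) as [_ [H _]]. apply (H tt tt). reflexivity.
Qed.

Lemma mp_tri (g : R -> R) x y z : metric_preserving g ->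
  0 <= x -> 0 <= y -> 0 <= z -> x <= y + z -> y <= x + z -> z <= x + y ->
  g x <= g y + g z.
Proof.
  intros Hg hx hy hz t1 t2 t3.
  pose proof (g0 g Hg) as G0. destruct Hg as [Gp Hm] eqn:E.
  destruct (Req_dec x 0) as [->|nx]. { rewrite G0. pose proof (Gp y hy); pose proof (Gp z hz); lra. }
  destruct (Req_dec y 0) as [->|ny]. { assert (x = z) as -> by lra. rewrite G0. lra. }
  destruct (Req_dec z 0) as [->|nz]. { assert (x = y) as -> by lra. rewrite G0. lra. }
  pose (d := fun p q : three => match p, q with
     | P1, P2 | P2, P1 => x | P1, P3 | P3, P1 => y | P2, P3 | P3, P2 => z | _, _ => 0 end).
  assert (Hd : is_metric three d).
  { split; [|split; [|split]].
    - intros [] []; simpl; lra.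
    - intros [] []; simpl; split; intro; try congruence; try lra.
    - intros [] []; reflexivity.
    - intros [] [] []; simpl; lra. }
  destruct (Hm three d Hd) as [_ [_ [_ Ht]]].
  specialize (Ht P2 P3 P1). simpl in Ht. lra.
Qed.

Lemma Rdiv_le_0_compat a b : 0 <= a -> 0 < b -> 0 <= a / b.
Proof. intros. unfold Rdiv. apply Rmult_le_pos; [lra|left; apply Rinv_0_lt_compat; lra]. Qed.
Lemma Rdiv_le_1 a b : 0 < b -> a <= b -> a / b <= 1.
Proof. intros. apply (Rmult_le_reg_r b); [lra|]. unfold Rdiv. rewrite Rmult_assoc, Rinv_l by lra. lra. Qed.

Lemma rpow_0 e : rpow 0 e = 0.
Proof. unfold rpow. destruct (Rlt_dec 0 0); lra. Qed.
Lemma rpow_pos x e : 0 < x -> rpow x e = Rpower x e.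
Proof. intro h. unfold rpow. destruct (Rlt_dec 0 x); lra. Qed.
Lemma rpow_nonneg x e : 0 <= rpow x e.
Proof. unfold rpow, Rpower. destruct (Rlt_dec 0 x); [left; apply exp_pos|lra]. Qed.
Lemma rpow_1base e : rpow 1 e = 1.
Proof. rewrite rpow_pos by lra. unfold Rpower. rewrite ln_1, Rmult_0_r. apply exp_0. Qed.
Lemma rpow_le x y e : 0 <= x <= y -> 0 < e -> rpow x e <= rpow y e.
Proof.
  intros [h1 h2] he. destruct (Req_dec x 0) as [->|nx].
  - rewrite rpow_0. apply rpow_nonneg.
  - rewrite !rpow_pos by lra. apply Rle_Rpower_l; lra.
Qed.
Lemma rpow_lt x y e : 0 <= x < y -> 0 < e -> rpow x e < rpow y e.
Proof.
  intros [h1 h2] he. destruct (Req_dec x 0) as [->|nx].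
  - rewrite rpow_0, rpow_pos by lra. apply exp_pos.
  - rewrite !rpow_pos by lra. apply Rlt_Rpower_l; lra.
Qed.
Lemma rpow_le_inv x y e : 0 <= x -> 0 <= y -> 0 < e -> rpow x e <= rpow y e -> x <= y.
Proof.
  intros hx hy he h. apply Rnot_lt_le; intro hl.
  pose proof (rpow_lt y x e (conj hy hl) he). lra.
Qed.
Lemma rpow_mul x y e : 0 <= x -> 0 <= y -> rpow (x*y) e = rpow x e * rpow y e.
Proof.
  intros hx hy. destruct (Req_dec x 0) as [->|nx]. { rewrite Rmult_0_l, !rpow_0. ring. }
  destruct (Req_dec y 0) as [->|ny]. { rewrite Rmult_0_r, !rpow_0. ring. }
  rewrite !rpow_pos by nra. symmetry; apply Rpower_mult_distr; lra.
Qed.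
Lemma rpow_rpow x e1 e2 : 0 <= x -> rpow (rpow x e1) e2 = rpow x (e1*e2).
Proof.
  intros hx. destruct (Req_dec x 0) as [->|nx]. { rewrite !rpow_0. reflexivity. }
  rewrite (rpow_pos x) by lra. rewrite rpow_pos by (unfold Rpower; apply exp_pos).
  rewrite rpow_pos by lra. apply Rpower_mult.
Qed.
Lemma rpow_one x : 0 <= x -> rpow x 1 = x.
Proof. intros hx. destruct (Req_dec x 0) as [->|nx]. { apply rpow_0. }
  rewrite rpow_pos by lra. apply Rpower_1; lra. Qed.
Lemma rpow_le1 x e : 0 <= x <= 1 -> 0 < e -> rpow x e <= 1.
Proof. intros h he. rewrite <- (rpow_1base e). apply rpow_le; lra. Qed.
Lemma rpow_sqrt z e : 0 <= z -> rpow (sqrt z) e = rpow z (e/2).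
Proof.
  intros hz. destruct (Req_dec z 0) as [->|nz]. { rewrite sqrt_0, !rpow_0. reflexivity. }
  rewrite <- Rpower_sqrt by lra. rewrite <- (rpow_pos z (/2)) by lra.
  rewrite rpow_rpow by lra. f_equal. field.
Qed.
Lemma rpow_sq s e : 0 <= s -> rpow s e = rpow (s^2) (e/2).
Proof. intros hs. rewrite <- rpow_sqrt by nra. rewrite sqrt_pow2 by lra. reflexivity. Qed.
Lemma rpow_split y p : 0 < y -> rpow y p = y * rpow y (p-1).
Proof.
  intros hy. rewrite !rpow_pos by lra. replace p with (1 + (p-1)) at 1 by ring.
  rewrite Rpower_plus, Rpower_1 by lra. reflexivity.
Qed.

Lemma bernoulli x p : 0 <= x -> 1 <= p -> 1 + p*(x-1) <= rpow x p.
Proof.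
  intros hx hp. destruct (Req_dec x 0) as [->|nx]. { rewrite rpow_0. lra. }
  rewrite rpow_pos by lra.
  set (y := Rpower x p).
  assert (hy : 0 < y) by (unfold y, Rpower; apply exp_pos).
  assert (lnz : forall z, 0 < z -> ln z <= z - 1).
  { intros z hz. pose proof (exp_ineq1_le (ln z)). rewrite exp_ln in H by lra. lra. }
  assert (Ly : ln y = p * ln x) by (unfold y; apply ln_Rpower).
  pose proof (lnz (y/x) ltac:(apply Rdiv_lt_0_compat; lra)) as h1.
  pose proof (lnz (/x) ltac:(apply Rinv_0_lt_compat; lra)) as h2.
  unfold Rdiv in h1. rewrite ln_mult in h1 by (try apply Rinv_0_lt_compat; lra).
  rewrite ln_Rinv in h1, h2 by lra. rewrite Ly in h1.
  assert (h3 : (p-1) * (- ln x) <= (p-1) * (/x - 1)) by (apply Rmult_le_compat_l; lra).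
  assert (h4 : 0 <= y * /x - 1 + (p-1)*(/x - 1)) by lra.
  assert (h5 : 0 <= x * (y * /x - 1 + (p-1)*(/x - 1))) by (apply Rmult_le_pos; lra).
  replace (x * (y * /x - 1 + (p-1)*(/x - 1))) with (y - x + (p - 1) - (p-1)*x) in h5
    by (field; lra).
  lra.
Qed.

Lemma tangent c w p : 0 < c -> 0 <= w -> 1 <= p ->
  rpow c p + p * (rpow c p / c) * (w - c) <= rpow w p.
Proof.
  intros hc hw hp.
  replace w with (c * (w / c)) at 2 by (field; lra).
  rewrite rpow_mul; [| lra | apply Rdiv_le_0_compat; lra].
  pose proof (bernoulli (w/c) p ltac:(apply Rdiv_le_0_compat; lra) hp) as hb.
  pose proof (rpow_nonneg c p) as hC.
  assert (rpow c p * (1 + p * (w / c - 1)) <= rpow c p * rpow (w / c) p)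
    by (apply Rmult_le_compat_l; lra).
  replace (rpow c p + p * (rpow c p / c) * (w - c)) with (rpow c p * (1 + p * (w / c - 1)))
    by (field; lra). lra.
Qed.

Lemma conv z l p : 0 <= z -> 0 <= l <= 1 -> 1 <= p ->
  rpow (1 - l + l*z) p <= 1 - l + l * rpow z p.
Proof.
  intros hz hl hp. set (c := 1 - l + l*z).
  assert (hc : 0 <= c) by (unfold c; nra).
  destruct (Req_dec c 0) as [E|nc].
  { rewrite E, rpow_0. pose proof (rpow_nonneg z p). nra. }
  pose proof (tangent c 1 p ltac:(lra) ltac:(lra) hp) as t1.
  pose proof (tangent c z p ltac:(lra) hz hp) as t2.
  rewrite rpow_1base in t1.
  set (C := rpow c p) in *. set (K := p * (C / c)) in *.
  assert (e1 : (1-l) * (C + K * (1 - c)) <= (1-l) * 1) by (apply Rmult_le_compat_l; lra).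
  assert (e2 : l * (C + K * (z - c)) <= l * rpow z p) by (apply Rmult_le_compat_l; lra).
  assert (E : (1-l) * (C + K * (1 - c)) + l * (C + K * (z - c)) = C) by (unfold c; ring).
  lra.
Qed.

Lemma star x y p : 0 < x -> x <= y -> y <= 1 -> 1 <= p ->
  rpow x p * (1 - rpow (1-y) p) <= rpow y p * (1 - rpow (1-x) p).
Proof.
  intros hx hxy hy hp. set (l := x / y).
  assert (hl : 0 <= l <= 1).
  { unfold l; split; [apply Rdiv_le_0_compat; lra|]. apply Rdiv_le_1; lra. }
  pose proof (conv (1-y) l p ltac:(lra) hl hp) as hc.
  replace (1 - l + l * (1-y)) with (1 - x) in hc by (unfold l; field; lra).
  set (Q := 1 - rpow (1-y) p).
  assert (hQ : 0 <= Q) by (unfold Q; pose proof (rpow_le1 (1-y) p ltac:(lra) ltac:(lra)); lra).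
  assert (h1 : l * Q <= 1 - rpow (1-x) p) by (unfold Q; lra).
  assert (h2 : rpow x p <= rpow y p * l).
  { rewrite (rpow_split x), (rpow_split y) by lra. unfold l.
    replace (y * rpow y (p - 1) * (x / y)) with (x * rpow y (p-1)) by (field; lra).
    apply Rmult_le_compat_l; [lra|].
    destruct (Req_dec p 1) as [->|np].
    - replace (1-1) with 0 by ring. rewrite !rpow_pos by lra. rewrite !Rpower_O by lra. lra.
    - apply rpow_le; lra. }
  pose proof (rpow_nonneg y p).
  assert (rpow y p * (l * Q) <= rpow y p * (1 - rpow (1-x) p)) by (apply Rmult_le_compat_l; lra).
  assert (rpow x p * Q <= rpow y p * l * Q) by (apply Rmult_le_compat_r; lra).
  lra.
Qed.

Definition F (k t : R) := rpow (1 - rpow t k) (/ k).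
Definition psi (k s : R) := F k (sqrt (1 - s^2)).

Lemma F_nonneg (k : R) (hk : 2 <= k) t : 0 <= F k t.
Proof. apply rpow_nonneg. Qed.

Lemma F_k (k : R) (hk : 2 <= k) t : 0 <= t <= 1 -> rpow (F k t) k = 1 - rpow t k.
Proof.
  intros ht. unfold F. pose proof (rpow_le1 t k ht ltac:(lra)).
  rewrite rpow_rpow by lra. replace (/k * k) with 1 by (field; lra). apply rpow_one; lra.
Qed.

Lemma sq_in (k : R) (hk : 2 <= k) s : 0 <= s <= 1 -> 0 <= sqrt (1 - s^2) <= 1.
Proof.
  intros hs. split; [apply sqrt_pos|]. apply Rle_trans with (sqrt 1); [apply sqrt_le_1_alt; nra|rewrite sqrt_1; lra].
Qed.

Lemma psi_mono (k : R) (hk : 2 <= k) s m : 0 <= s -> s <= m -> m <= 1 -> psi k s <= psi k m.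
Proof.
  intros h1 h2 h3. unfold psi, F. apply rpow_le; [|apply Rinv_0_lt_compat; lra].
  pose proof (sq_in k hk m ltac:(lra)). pose proof (sq_in k hk s ltac:(lra)).
  assert (sqrt (1 - m^2) <= sqrt (1 - s^2)) by (apply sqrt_le_1_alt; nra).
  pose proof (rpow_le _ _ k (conj (proj1 H) H1) ltac:(lra)).
  pose proof (rpow_le1 (sqrt (1 - s^2)) k H0 ltac:(lra)). lra.
Qed.

Lemma psi_star (k : R) (hk : 2 <= k) s m : 0 <= s -> s <= m -> m <= 1 -> s * psi k m <= m * psi k s.
Proof.
  intros h1 h2 h3. destruct (Req_dec s 0) as [->|ns].
  { rewrite Rmult_0_l. apply Rmult_le_pos; [lra|apply (F_nonneg k hk)]. }
  assert (0 <= psi k m /\ 0 <= psi k s) as [pm ps] by (split; apply (F_nonneg k hk)).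
  apply (rpow_le_inv _ _ k); try nra.
  rewrite !rpow_mul by lra. unfold psi.
  rewrite !(F_k k hk) by (apply (sq_in k hk); lra).
  rewrite !(rpow_sqrt _ k) by nra.
  rewrite (rpow_sq s k), (rpow_sq m k) by lra.
  replace (1 - (1 - m^2)) with (m^2) by ring.
  apply star; nra.
Qed.

Lemma psi_F (k : R) (hk : 2 <= k) u : 0 <= u <= 1 -> psi k (sqrt (1 - u^2)) = F k u.
Proof.
  intros hu. unfold psi. rewrite pow2_sqrt by nra.
  replace (1 - (1 - u^2)) with (u^2) by ring. rewrite sqrt_pow2 by lra. reflexivity.
Qed.

Lemma part2_core (k : R) (hk : 2 <= k) u v w : 0 <= u <= 1 -> 0 <= v <= 1 -> 0 <= w <= 1 ->
  v*w - sqrt (1 - v^2) * sqrt (1 - w^2) <= u -> F k u <= F k v + F k w.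
Proof.
  intros hu hv hw hang.
  pose proof (sq_in k hk u hu) as Su. pose proof (sq_in k hk v hv) as Sv. pose proof (sq_in k hk w hw) as Sw.
  pose proof (pow2_sqrt (1-u^2) ltac:(nra)) as Eu.
  pose proof (pow2_sqrt (1-v^2) ltac:(nra)) as Ev.
  pose proof (pow2_sqrt (1-w^2) ltac:(nra)) as Ew.
  rewrite <- (psi_F k hk u), <- (psi_F k hk v), <- (psi_F k hk w) by lra.
  set (su := sqrt (1-u^2)) in *. set (sv := sqrt (1-v^2)) in *. set (sw := sqrt (1-w^2)) in *.
  assert (Hs : su <= sv + sw).
  { destruct (Rle_lt_dec (v*w - sv*sw) 0) as [hn|hp].
    - assert (1 <= (sv + sw)^2) by nra. nra.
    - assert (su^2 <= (sv + sw)^2).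
      { assert ((v*w - sv*sw)^2 <= u^2) by nra.
        assert ((v*w - sv*sw)^2 + (sv*w + v*sw)^2 = 1).
        { replace ((v*w - sv*sw)^2 + (sv*w + v*sw)^2) with ((v^2 + sv^2)*(w^2+sw^2)) by ring.
          rewrite Ev, Ew. ring. }
        assert ((sv*w + v*sw)^2 <= (sv+sw)^2).
        { assert (0 <= sv*w + v*sw <= sv + sw) by nra. nra. }
        nra. }
      nra. }
  set (m := Rmin (sv + sw) 1).
  assert (hm1 : m <= 1) by apply Rmin_r.
  assert (hm2 : m <= sv + sw) by apply Rmin_l.
  assert (hsu : su <= m) by (apply Rmin_glb; lra).
  assert (hsv : sv <= m) by (apply Rmin_glb; lra).
  assert (hsw : sw <= m) by (apply Rmin_glb; lra).
  pose proof (psi_mono k hk su m ltac:(lra) hsu hm1).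
  pose proof (psi_star k hk sv m ltac:(lra) hsv hm1).
  pose proof (psi_star k hk sw m ltac:(lra) hsw hm1).
  pose proof (F_nonneg k hk (sqrt (1 - m^2))) as pm. fold (psi k m) in pm.
  pose proof (F_nonneg k hk (sqrt (1 - sv^2))) as pv. fold (psi k sv) in pv.
  pose proof (F_nonneg k hk (sqrt (1 - sw^2))) as pw. fold (psi k sw) in pw.
  destruct (Req_dec m 0) as [E|nm].
  - assert (Hv : sv = m) by lra. rewrite <- Hv in H. lra.
  - assert (m * psi k m <= m * (psi k sv + psi k sw)) by nra.
    assert (psi k m <= psi k sv + psi k sw) by (apply (Rmult_le_reg_l m); lra).
    lra.
Qed.

Lemma abs_le1 b : 0 <= 1 - b^2 -> 0 <= Rabs b <= 1.
Proof. intros h. split; [apply Rabs_pos|]. unfold Rabs; destruct (Rcase_abs b); nra. Qed.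

Lemma abs_angle a b c : psd3 a b c ->
  Rabs b * Rabs c - sqrt (1 - Rabs b ^ 2) * sqrt (1 - Rabs c ^ 2) <= Rabs a.
Proof.
  intros H.
  replace (Rabs b ^ 2) with (b^2) by (rewrite <- pow2_abs; reflexivity).
  replace (Rabs c ^ 2) with (c^2) by (rewrite <- pow2_abs; reflexivity).
  rewrite <- Rabs_mult.
  destruct (Rle_lt_dec 0 (b*c)) as [h|h].
  - rewrite (Rabs_right (b*c)) by lra. pose proof (psd_angle a b c H).
    pose proof (Rle_abs a). lra.
  - rewrite (Rabs_left (b*c)) by lra. pose proof (psd_angle _ _ _ (psd_neg a b c H)).
    replace ((-b)^2) with (b^2) in H0 by ring.
    pose proof (Rle_abs (-a)). rewrite Rabs_Ropp in H1. lra.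
Qed.

Theorem theorem4 (a b c : R) (HB : psd3 a b c) :
  (forall (I : R -> Prop) (f g : R -> R),
     interval_in_nonneg I ->
     (forall p q, I p -> I q -> p < q -> f q < f p) ->
     (forall y, -1 <= y <= 1 <-> exists p, I p /\ f p = y) ->
     (forall p q, I p -> I q -> I (p + q) ->
        f (p + q) = f p * f q - sqrt (1 - f p ^ 2) * sqrt (1 - f q ^ 2)) ->
     metric_preserving g ->
     forall pa pb pc, I pa -> I pb -> I pc ->
       f pa = a -> f pb = b -> f pc = c ->
       g pa <= g pb + g pc) /\
  (forall k : R, 2 <= k ->
     rpow (1 - rpow (Rabs a) k) (/ k)
       <= rpow (1 - rpow (Rabs b) k) (/ k) + rpow (1 - rpow (Rabs c) k) (/ k)).
Proof.
  split.
  - intros I f g HI Hdec _ Hfe Hg pa pb pc Ia Ib Ic Ea Eb Ec.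
    pose proof (proj1 HI _ Ia). pose proof (proj1 HI _ Ib). pose proof (proj1 HI _ Ic).
    apply mp_tri; auto.
    + apply (tri_from_f I f); auto. rewrite Ea, Eb, Ec. apply psd_angle; exact HB.
    + apply (tri_from_f I f); auto. rewrite Ea, Eb, Ec.
      apply psd_angle. apply psd_swap13. exact HB.
    + apply (tri_from_f I f); auto. rewrite Ea, Eb, Ec.
      apply psd_angle. apply psd_swap13, psd_swap12. exact HB.
  - intros k hk.
    assert (ha : 0 <= 1 - a^2) by (pose proof (HB 1 (-a) 0); lra).
    assert (hb : 0 <= 1 - b^2) by (apply (psd_b2 a b c HB)).
    assert (hc : 0 <= 1 - c^2) by (pose proof (HB 0 1 (-c)); lra).
    apply (part2_core k hk); try (apply abs_le1; assumption).
    apply abs_angle. exact HB.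
Qed.
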